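(* Consider the semi-distributed gossip network described in the context, with $n$ nodes, source self-update rate $\lambda_e>0$, source-to-network update rate $\lambda>0$, and total gossip capacity $B=n\lambda$. Then, with $\lambda_e$ and $\lambda$ fixed, the steady-state mean version age $a_i=\lim_{t\to\infty}\mathbb{E}[\Delta_i(t)]$ of any node $i$ scales as $O(1)$ as $n\to\infty$.
   Context: A source (node $0$) and nodes $\mathcal{N}=\{1,\dots,n\}$ form a fully connected network. The source generates new versions of its information according to a Poisson process of rate $\lambda_e$; $N_s(t)$ denotes the source's version at time $t$ and $N_i(t)$ the version held by node $i$. The source sends its current version to each node $i$ according to an independent Poisson process of rate $\lambda/n$ (total rate $\lambda$). The version age of node $i$ is $\Delta_i(t)=N_s(t)-N_i(t)$: a source self-update increases every $\Delta_i$ by $1$; a source-to-node-$i$ update sets $\Delta_i$ to $0$; when node $j$ gossips to node $i$, node $i$'s age becomes $\min\{\Delta_j(t),\Delta_i(t)\}$. A node gossiping at total rate $B$ sends gossip updates to each of its $n-1$ neighbors according to a Poisson process of rate $B/(n-1)$. Semi-distributed scheme: whenever a node receives an update from the source, it sends a pilot signal to all other nodes and starts gossiping with total rate $B$; a gossiping node stops gossiping as soon as it receives a pilot signal from another node. Thus at any time (at most) one node gossips, namely the one most recently updated by the source. The steady-state mean age is $a_i=\lim_{t\to\infty}\mathbb{E}[\Delta_i(t)]$. *)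

(* Defs.v *)
From HB Require Import structures.
From mathcomp Require Import all_boot all_order all_algebra.
From mathcomp Require Import all_classical all_reals all_analysis.
Set Implicit Arguments. Unset Strict Implicit. Unset Printing Implicit Defensive.
Import Order.TTheory GRing.Theory Num.Theory.
Import numFieldNormedType.Exports.
Local Open Scope ring_scope.

(* Event types (one finite type):
     None           : the source generates a new version (rate lam_e);
     Some (inl j)   : the source sends its version to node j (rate lam/n);
     Some (inr k)   : the currently gossiping node (if any) sends a gossip
                      update to node k (rate B/(n-1) for each k).  If k is the
                      gossiping node itself, or if no node gossips yet, the
                      event has no effect (a phantom event; this only adds
                      self-loops and does not change the law of the process,
                      since each of the n-1 real neighbours still receives
                      gossip at rate B/(n-1)). *)
Definition event (n : nat) := option ('I_n + 'I_n)%type.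

(* State: the vector of version ages, and the node currently gossiping. *)
Definition gstate (n : nat) := (('I_n -> nat) * option 'I_n)%type.

Definition step (n : nat) (e : event n) (x : gstate n) : gstate n :=
  let: (age, g) := x in
  match e with
  | None => (fun m => (age m).+1, g)
  | Some (inl j) =>
      (* node j is reset to age 0, sends a pilot signal (any previous
         gossiper stops) and becomes the unique gossiping node *)
      (fun m => if m == j then 0%N else age m, Some j)
  | Some (inr k) =>
      match g with
      | Some gg =>
          if k == gg then x
          else (fun m => if m == k then minn (age gg) (age k) else age m, g)
      | None => x
      end
  end.

Definition rate (R : realType) (n : nat) (lam_e lam B : R) (e : event n) : R :=
  match e with
  | None => lam_e
  | Some (inl _) => lam / n%:R
  | Some (inr _) => B / (n.-1)%:R
  end.

Definition total_rate (R : realType) (n : nat) (lam_e lam B : R) : R :=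
  \sum_(e : event n) rate lam_e lam B e.

Fixpoint expect_after (R : realType) (n : nat) (lam_e lam B : R) (k : nat)
    (f : gstate n -> R) (x : gstate n) : R :=
  match k with
  | 0%N => f x
  | k'.+1 => \sum_(e : event n)
      (rate lam_e lam B e / total_rate n lam_e lam B) *
      expect_after lam_e lam B k' f (step e x)
  end.

Definition init_state (n : nat) : gstate n := (fun _ => 0%N, None).

(* E[Delta_i(t)]: events occur according to a Poisson process of rate
   q = total_rate, so the number of events by time t is Poisson(q t). *)
Definition mean_age (R : realType) (n : nat) (lam_e lam B : R) (i : 'I_n)
    (t : R) : R :=
  let q := total_rate n lam_e lam B in
  limn (fun N : nat => \sum_(0 <= k < N)
     (expR (- (q * t)) * (q * t) ^+ k / (k`!)%:R *
      expect_after lam_e lam B k (fun x => ((x.1 i)%:R : R)) (init_state n))).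

(* Main.v *)
Require Import Defs.
From HB Require Import structures.
From mathcomp Require Import all_boot all_order all_algebra.
From mathcomp Require Import all_classical all_reals all_analysis.
From mathcomp Require Import ring lra.
Import Order.TTheory GRing.Theory Num.Theory.
Import numFieldNormedType.Exports.
Local Open Scope classical_set_scope.
Local Open Scope ring_scope.

Notation EA := expect_after.
Definition pr {R : realType} {n} (le l B : R) (e : event n) :=
  rate le l B e / total_rate n le l B.

Lemma EA_ext {R : realType} {n : nat} (le l B : R) k (f g : gstate n -> R) x :
  (forall y, f y = g y) -> EA le l B k f x = EA le l B k g x.
Proof.
move=> fg; elim: k x => [|k IH] x /=; first exact: fg.
by apply: eq_bigr => e _; rewrite IH.
Qed.

Lemma EA_lin {R : realType} {n : nat} (le l B : R) k (f g : gstate n -> R) a b c x :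
  \sum_(e : event n) pr le l B e = 1 ->
  EA le l B k (fun y => a * f y + b * g y + c) x =
  a * EA le l B k f x + b * EA le l B k g x + c.
Proof.
move=> h1; elim: k x => [|k IH] x //=.
under eq_bigr => e _ do rewrite IH.
rewrite -/(pr _ _ _ _).
transitivity (a * (\sum_(e : event n) pr le l B e * EA le l B k f (step e x))
  + b * (\sum_(e : event n) pr le l B e * EA le l B k g (step e x))
  + c * (\sum_(e : event n) pr le l B e)).
  rewrite !mulr_sumr -!big_split /=; apply: eq_bigr => e _; rewrite /pr; ring.
by rewrite h1 mulr1.
Qed.

Lemma EA_shift {R : realType} {n : nat} (le l B : R) k (f : gstate n -> R) x :
  EA le l B k.+1 f x =
  EA le l B k (fun y => \sum_(e : event n) pr le l B e * f (step e y)) x.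
Proof.
elim: k x => [|k IH] x //=.
by apply: eq_bigr => e _; rewrite -IH.
Qed.

Definition Aobs {R : realType} {n} (i : 'I_n) (y : gstate n) : R := (y.1 i)%:R.
Definition Gobs {R : realType} {n} (i : 'I_n) (y : gstate n) : R :=
  if y.2 is Some gg then ((y.1 i - y.1 gg)%N)%:R else 0.

Lemma A_none {R : realType} {n : nat} (i : 'I_n) y :
  Aobs i (step None y) = Aobs i y + 1 :> R.
Proof. by case: y => age g; rewrite /Aobs /= -addn1 natrD. Qed.

Lemma A_inl {R : realType} {n : nat} (i j : 'I_n) y :
  Aobs i (step (Some (inl j)) y) = Aobs i y - (j == i)%:R * Aobs i y :> R.
Proof.
case: y => age g; rewrite /Aobs /=.
case: (eqVneq i j) => [->|ij]; first by rewrite ?eqxx mul1r subrr.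
by rewrite mul0r subr0.
Qed.

Lemma A_inr {R : realType} {n : nat} (i k : 'I_n) y :
  Aobs i (step (Some (inr k)) y) = Aobs i y - (k == i)%:R * Gobs i y :> R.
Proof.
case: y => age [gg|]; rewrite /Aobs /Gobs /=; last by rewrite mulr0 subr0.
case: (eqVneq k gg) => [->|kg] /=.
  case: (eqVneq gg i) => [->|gi]; first by rewrite subnn mulr0 subr0.
  by rewrite mul0r subr0.
case: (eqVneq i k) => [<-|ik] /=.
  rewrite ?eqxx mul1r -natrB ?leq_subr //; congr (_%:R).
  by rewrite minnC minnE.
by rewrite mul0r subr0.
Qed.

Lemma G_none {R : realType} {n : nat} (i : 'I_n) y :
  Gobs i (step None y) = Gobs i y :> R.
Proof. by case: y => age [gg|] //; rewrite /Gobs /= subSS. Qed.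

Lemma G_inl {R : realType} {n : nat} (i j : 'I_n) y :
  Gobs i (step (Some (inl j)) y) = (j != i)%:R * Aobs i y :> R.
Proof.
case: y => age g; rewrite /Aobs /Gobs /= eqxx subn0.
case: (eqVneq i j) => [->|ij]; first by rewrite ?eqxx /= ?subnn mul0r.
by rewrite mul1r.
Qed.

Lemma G_inr {R : realType} {n : nat} (i k : 'I_n) y :
  Gobs i (step (Some (inr k)) y) = (k != i)%:R * Gobs i y :> R.
Proof.
case: y => age [gg|]; rewrite /Aobs /Gobs /=; last by rewrite mulr0.
case: (eqVneq k gg) => [->|kg] /=.
  case: (eqVneq gg i) => [->|gi]; first by rewrite subnn mulr0.
  by rewrite mul1r.
rewrite [gg == k]eq_sym (negbTE kg).
case: (eqVneq i k) => [<-|ik] /=.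
  by rewrite mul0r; apply/eqP; rewrite pnatr_eq0 subn_eq0 geq_minl.
by rewrite mul1r.
Qed.

Lemma sum_option {R : realType} (T : finType) (F : option T -> R) :
  \sum_(e : option T) F e = F None + \sum_(t : T) F (Some t).
Proof.
rewrite (bigD1 None) //=; congr (_ + _).
rewrite (reindex_omap Some id) /=; last by case.
by apply: eq_bigl => j; rewrite eqxx.
Qed.

Lemma sum_sumT {R : realType} (T1 T2 : finType) (F : (T1 + T2)%type -> R) :
  \sum_(e : (T1 + T2)%type) F e = \sum_(t : T1) F (inl t) + \sum_(t : T2) F (inr t).
Proof.
rewrite [LHS](bigID (fun e => if e is inl _ then true else false)) /=.
congr (_ + _).
  rewrite (reindex_omap inl (fun e => if e is inl a then Some a else None)) /=; last by case.
  by apply: eq_bigl => j; rewrite eqxx.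
rewrite (reindex_omap inr (fun e => if e is inr a then Some a else None)) /=; last by case.
by apply: eq_bigl => j; rewrite eqxx.
Qed.

Lemma sum_event {R : realType} {n : nat} (F : event n -> R) :
  \sum_(e : event n) F e = F None + \sum_(j : 'I_n) F (Some (inl j))
     + \sum_(k : 'I_n) F (Some (inr k)).
Proof. by rewrite sum_option sum_sumT addrA. Qed.

Lemma sum_delta {R : realType} {n : nat} (i : 'I_n) (c d : R) :
  \sum_(j : 'I_n) (c - (j == i)%:R * d) = n%:R * c - d.
Proof.
rewrite sumrB sumr_const card_ord mulr_natl; congr (_ - _).
rewrite (bigD1 i) //= eqxx mul1r big1 ?addr0 // => j /negbTE ->.
by rewrite mul0r.
Qed.

Lemma sum_ndelta {R : realType} {n : nat} (i : 'I_n) (d : R) :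
  \sum_(j : 'I_n) ((j != i)%:R * d) = n%:R * d - d.
Proof.
rewrite -(sum_delta i d d); apply: eq_bigr => j _.
by case: (j == i); rewrite /= ?mul1r ?mul0r ?subr0 ?subrr.
Qed.

Lemma total_rateE {R : realType} {n : nat} (le l B : R) :
  total_rate n le l B = le + n%:R * (l / n%:R) + n%:R * (B / (n.-1)%:R).
Proof.
by rewrite /total_rate sum_event /= !sumr_const card_ord !mulr_natl.
Qed.

Lemma pr_sum1 {R : realType} {n : nat} (le l B : R) :
  total_rate n le l B != 0 ->
  \sum_(e : event n) pr le l B e = 1.
Proof.
move=> hq; rewrite /pr -mulr_suml -/(total_rate n le l B).
by rewrite mulfV.
Qed.


Lemma alg_PA {R : realType} (p0 ps pg A G nn : R) :
  p0 + nn * ps + nn * pg = 1 ->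
  p0 * (A + 1) + ps * (nn * A - A) + pg * (nn * A - G) = (1 - ps) * A + (- pg) * G + p0.
Proof. move=> h; have -> : p0 = 1 - nn * ps - nn * pg by rewrite -h; ring. ring. Qed.

Lemma alg_PG {R : realType} (p0 ps pg A G nn : R) :
  p0 + nn * ps + nn * pg = 1 ->
  p0 * G + ps * (nn * A - A) + pg * (nn * G - G) =
  ((nn - 1) * ps) * A + (1 - nn * ps - pg) * G + 0.
Proof. move=> h; have -> : p0 = 1 - nn * ps - nn * pg by rewrite -h; ring. ring. Qed.
Lemma PA {R : realType} {n : nat} (le l B : R) (i : 'I_n) y :
  total_rate n le l B != 0 ->
  \sum_(e : event n) pr le l B e * Aobs i (step e y) =
  (1 - l / n%:R / total_rate n le l B) * Aobs i y
  + (- (B / (n.-1)%:R / total_rate n le l B)) * Gobs i y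
  + le / total_rate n le l B.
Proof.
move=> hq; have h1 := pr_sum1 le l B hq.
rewrite sum_event in h1; rewrite sum_event.
rewrite /pr /= !sumr_const card_ord in h1.
rewrite /pr /=.
set q := total_rate n le l B in h1 *.
rewrite (eq_bigr (fun j => l / n%:R / q * (Aobs i y - (j == i)%:R * Aobs i y))); last first.
  by move=> j _; rewrite A_inl.
rewrite [X in _ + X](eq_bigr (fun j => B / (n.-1)%:R / q * (Aobs i y - (j == i)%:R * Gobs i y))); last first.
  by move=> j _; rewrite A_inr.
rewrite -!mulr_sumr !sum_delta A_none.
set p0 := le / q in h1 *. set ps := l / n%:R / q in h1 *. set pg := B / (n.-1)%:R / q in h1 *.
rewrite -[ps *+ n]mulr_natl -[pg *+ n]mulr_natl in h1.
by apply: alg_PA.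
Qed.

Lemma PG {R : realType} {n : nat} (le l B : R) (i : 'I_n) y :
  total_rate n le l B != 0 ->
  \sum_(e : event n) pr le l B e * Gobs i (step e y) =
  ((n%:R - 1) * (l / n%:R / total_rate n le l B)) * Aobs i y
  + (1 - n%:R * (l / n%:R / total_rate n le l B) - B / (n.-1)%:R / total_rate n le l B) * Gobs i y
  + 0.
Proof.
move=> hq; have h1 := pr_sum1 le l B hq.
rewrite sum_event in h1; rewrite sum_event.
rewrite /pr /= !sumr_const card_ord in h1.
rewrite /pr /=.
set q := total_rate n le l B in h1 *.
rewrite (eq_bigr (fun j => l / n%:R / q * ((j != i)%:R * Aobs i y))); last first.
  by move=> j _; rewrite G_inl.
rewrite [X in _ + X](eq_bigr (fun j => B / (n.-1)%:R / q * ((j != i)%:R * Gobs i y))); last first.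
  by move=> j _; rewrite G_inr.
rewrite -!mulr_sumr !sum_ndelta G_none.
set p0 := le / q in h1 *. set ps := l / n%:R / q in h1 *. set pg := B / (n.-1)%:R / q in h1 *.
rewrite -[ps *+ n]mulr_natl -[pg *+ n]mulr_natl in h1.
by apply: alg_PG.
Qed.

Lemma cvg_scale_y {R : realType} (c : R) : 0 < c ->
  c * t @[t --> +oo] --> +oo.
Proof.
move=> c0; apply/cvgryPge => A; exists (A / c); split; first by rewrite num_real.
move=> t; rewrite ltr_pdivrMr // => h; rewrite mulrC; exact: ltW.
Qed.

Lemma cvg_expR_scale {R : realType} (c : R) : 0 < c ->
  expR (- (c * t)) @[t --> +oo] --> 0.
Proof.
move=> c0.
have h1 := @cvg_scale_y R c c0.
have h2 := @cvgr_expR R.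
exact: (cvg_comp _ _ h1 h2).
Qed.

Lemma series_exp_cvg {R : realType} (x : R) :
  series (exp_coeff x) n @[n --> \oo] --> expR x.
Proof. exact: (is_cvg_series_exp_coeff x). Qed.

Lemma pois_cvg {R : realType} (x a b1 b2 r1 r2 : R) :
  (fun N : nat => \sum_(0 <= k < N)
     (expR (- x) * x ^+ k / (k`!)%:R * (a + b1 * r1 ^+ k + b2 * r2 ^+ k)))
  @ \oo --> a + b1 * expR (x * r1 - x) + b2 * expR (x * r2 - x).
Proof.
have E : forall N : nat, \sum_(0 <= k < N)
     (expR (- x) * x ^+ k / (k`!)%:R * (a + b1 * r1 ^+ k + b2 * r2 ^+ k)) =
   expR (- x) * (a * series (exp_coeff x) N + b1 * series (exp_coeff (x * r1)) N
     + b2 * series (exp_coeff (x * r2)) N).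
  move=> N; rewrite !seriesEnat /= !mulr_sumr -!big_split /= mulr_sumr.
  apply: eq_bigr => k _; rewrite /exp_coeff /= !exprMn; ring.
rewrite (_ : (fun N : nat => _) = (fun N => expR (- x) * (a * series (exp_coeff x) N + b1 * series (exp_coeff (x * r1)) N
     + b2 * series (exp_coeff (x * r2)) N))); last by apply/funext => N; exact: E.
have -> : a + b1 * expR (x * r1 - x) + b2 * expR (x * r2 - x) =
  expR (- x) * (a * expR x + b1 * expR (x * r1) + b2 * expR (x * r2)).
  rewrite !mulrDr; congr (_ + _ + _); rewrite mulrCA -expRD.
  - by rewrite addNr expR0 mulr1.
  - by rewrite addrC.
  - by rewrite addrC.
apply: cvgMr; apply: cvgD; [apply: cvgD|]; apply: cvgMr; exact: series_exp_cvg.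
Qed.

Lemma geom_rec {R : realType} (x : nat -> R) (r c : R) : r != 1 -> x 0%N = 0 ->
  (forall k, x k.+1 = r * x k + c) -> forall k, x k = c / (1 - r) - c / (1 - r) * r ^+ k.
Proof.
move=> r1 x0 xS; have hr : 1 - r != 0 by rewrite subr_eq0 eq_sym.
elim=> [|k IH]; first by rewrite x0 expr0 mulr1 subrr.
rewrite xS IH exprS; field; exact: hr.
Qed.

Lemma alg_a {R : realType} (le l m q : R) : 0 < le -> 0 < l -> 2 <= m -> 0 < q ->
  let ps := l / m / q in let pg := m * l / (m - 1) / q in let p0 := le / q in
  let c1 := (m - 1) * ps * p0 / (1 - (1 - ps - pg)) in
  let c2 := p0 / (1 - (1 - m * ps)) in
  (c1 - pg * c2) / ((m - 1) * ps - pg) <= 2 * le / l.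
Proof.
move=> le0 l0 m2 q0; cbv zeta.
have mn0 : m != 0 by apply/eqP; lra.
have m1n0 : m - 1 != 0 by apply/eqP; lra.
have qn0 : q != 0 by apply/eqP; lra.
have ln0 : l != 0 by apply/eqP; lra.
have h3 : m ^+ 2 + m - 1 != 0 by apply/eqP; nra.
have h4 : 1 - 2 * m != 0 by apply/eqP; nra.
match goal with |- is_true (?X <= _) => have -> : X =
   le / l + le / l * ((m - 1) ^+ 2 / (m ^+ 2 + m - 1)) end.
  field; rewrite h3 ln0 qn0 m1n0 mn0 /=; apply/andP; split; apply/eqP => h; nra.
have hf : (m - 1) ^+ 2 / (m ^+ 2 + m - 1) <= 1.
  rewrite ler_pdivrMr; last by nra.
  nra.
have hll : 0 <= le / l by rewrite divr_ge0 // ltW.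
have := ler_wpM2l hll hf; rewrite mulr1 => h.
have -> : 2 * le / l = le / l + le / l by rewrite -mulrA; ring.
by rewrite lerD2l.
Qed.

Lemma pois_cvg' {R : realType} (x : R) (u : nat -> R) (a b1 b2 r1 r2 : R) :
  (forall k, u k = a + b1 * r1 ^+ k + b2 * r2 ^+ k) ->
  (fun N : nat => \sum_(0 <= k < N) (expR (- x) * x ^+ k / (k`!)%:R * u k))
  @ \oo --> a + b1 * expR (x * r1 - x) + b2 * expR (x * r2 - x).
Proof.
move=> hu.
rewrite (_ : (fun N : nat => _) = (fun N : nat => \sum_(0 <= k < N)
     (expR (- x) * x ^+ k / (k`!)%:R * (a + b1 * r1 ^+ k + b2 * r2 ^+ k)))).
  exact: pois_cvg.
by apply/funext => N; apply: eq_bigr => k _; rewrite hu.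
Qed.

Theorem theorem1 (R : realType) (lam_e lam : R) :
  0 < lam_e -> 0 < lam ->
  exists C : R, exists N : nat, forall n : nat, (2 <= n)%N -> (N <= n)%N ->
    forall i : 'I_n, exists a : R,
      (mean_age lam_e lam (n%:R * lam) i t @[t --> +oo] --> a) /\ a <= C.
Proof.
move=> le0 l0.
exists (2 * lam_e / lam), 2%N => n n2 _ i.
have hm : (2 : R) <= n%:R by rewrite (ler_nat R 2 n).
have hn1 : (n.-1)%:R = n%:R - 1 :> R by rewrite -subn1 natrB // ltnW.
pose B := n%:R * lam.
pose q := total_rate n lam_e lam B.
have q0 : 0 < q.
  rewrite /q total_rateE hn1 /B.
  have h1 : 0 < n%:R - 1 :> R by lra.
  have h2 : 0 < n%:R :> R by lra.
  apply: addr_gt0; [apply: addr_gt0 => //|]; apply: mulr_gt0 => //; apply: divr_gt0 => //.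
  exact: mulr_gt0.
have hqn : q != 0 by apply/eqP; lra.
pose ps := lam / n%:R / q.
pose pg := B / (n.-1)%:R / q.
pose p0 := lam_e / q.
pose u k := expect_after lam_e lam B k (Aobs i) (init_state n).
pose w k := expect_after lam_e lam B k (Gobs i) (init_state n).
have u0 : u 0%N = 0 by rewrite /u /= /Aobs /=.
have w0 : w 0%N = 0 by rewrite /w /= /Gobs /=.
have uS k : u k.+1 = (1 - ps) * u k + (- pg) * w k + p0.
  rewrite /u EA_shift (EA_ext _ _ _ _ _ _ _ (fun y => PA lam_e lam B i y hqn)).
  by rewrite EA_lin //; exact: pr_sum1.
have wS k : w k.+1 = ((n%:R - 1) * ps) * u k + (1 - n%:R * ps - pg) * w k + 0.
  rewrite /w EA_shift (EA_ext _ _ _ _ _ _ _ (fun y => PG lam_e lam B i y hqn)).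
  by rewrite EA_lin //; exact: pr_sum1.
have ps0 : 0 < ps by rewrite /ps !divr_gt0 //; lra.
have pg0 : 0 < pg.
  rewrite /pg /B hn1 !divr_gt0 //; [apply: mulr_gt0 => //|]; lra.
pose s k := u k - w k.
pose z k := (n%:R - 1) * ps * u k - pg * w k.
have hs := @geom_rec R s (1 - n%:R * ps) p0.
have hz := @geom_rec R z (1 - ps - pg) ((n%:R - 1) * ps * p0).
have hs' : forall k, s k = p0 / (1 - (1 - n%:R * ps)) - p0 / (1 - (1 - n%:R * ps)) * (1 - n%:R * ps) ^+ k.
  apply: hs.
  - apply/eqP => h; have : n%:R * ps = 0 by lra. by apply/eqP; rewrite mulf_neq0 //; apply/eqP; lra.
  - by rewrite /s u0 w0 subrr.
  - by move=> k; rewrite /s uS wS; ring.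
have hz' : forall k, z k = (n%:R - 1) * ps * p0 / (1 - (1 - ps - pg))
     - (n%:R - 1) * ps * p0 / (1 - (1 - ps - pg)) * (1 - ps - pg) ^+ k.
  apply: hz.
  - apply/eqP => h; lra.
  - by rewrite /z u0 w0 !mulr0 subrr.
  - by move=> k; rewrite /z uS wS; ring.
have hn0 : n%:R != 0 :> R by apply/eqP; lra.
have hn10 : n%:R - 1 != 0 :> R by apply/eqP; lra.
pose D := (n%:R - 1) * ps - pg.
have hD : D != 0.
  have -> : D = lam * (1 - 2 * n%:R) / (n%:R * (n%:R - 1) * q).
    by rewrite /D /ps /pg /B hn1; field; rewrite hqn hn0 hn10.
  by rewrite !mulf_neq0 ?invr_eq0 ?mulf_neq0 //; apply/eqP; lra.
pose c1 := (n%:R - 1) * ps * p0 / (1 - (1 - ps - pg)).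
pose c2 := p0 / (1 - (1 - n%:R * ps)).
pose a := (c1 - pg * c2) / D.
have huk : forall k, u k = a + (- c1 / D) * (1 - ps - pg) ^+ k + (pg * c2 / D) * (1 - n%:R * ps) ^+ k.
  move=> k.
  have e : u k = (z k - pg * s k) / D by rewrite /z /s /D; field.
  by rewrite e hz' hs' /a -/c1 -/c2; field.
have hmean : forall t, mean_age lam_e lam B i t =
   a + (- c1 / D) * expR (q * t * (1 - ps - pg) - q * t)
     + (pg * c2 / D) * expR (q * t * (1 - n%:R * ps) - q * t).
  move=> t; rewrite /mean_age -/q.
  apply: cvg_lim => //.
  exact: (@pois_cvg' R (q * t) u _ _ _ _ _ huk).
exists a; split.
  rewrite (eq_cvg _ _ hmean).
  have E : (fun t => a + (- c1 / D) * expR (q * t * (1 - ps - pg) - q * t)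
     + (pg * c2 / D) * expR (q * t * (1 - n%:R * ps) - q * t)) =1
     (fun t => a + (- c1 / D) * expR (- ((q * (ps + pg)) * t))
     + (pg * c2 / D) * expR (- ((q * (n%:R * ps)) * t))).
    by move=> t /=; congr (_ + _ * expR _ + _ * expR _); ring.
  rewrite (eq_cvg _ _ E).
  have qa : 0 < q * (ps + pg) by apply: mulr_gt0 => //; lra.
  have qb : 0 < q * (n%:R * ps) by apply: mulr_gt0 => //; apply: mulr_gt0 => //; lra.
  have H : (fun t => a + (- c1 / D) * expR (- ((q * (ps + pg)) * t))
     + (pg * c2 / D) * expR (- ((q * (n%:R * ps)) * t))) @ +oo --> a + (- c1 / D) * 0 + (pg * c2 / D) * 0.
    apply: cvgD; [apply: cvgD; [exact: cvg_cst|]|]; apply: cvgMr; exact: cvg_expR_scale.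
  by rewrite !mulr0 !addr0 in H.
rewrite /a /c1 /c2 /D /ps /pg /p0 /B hn1.
have := @alg_a R lam_e lam n%:R q le0 l0 hm q0; cbv zeta; exact.
Qed.
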